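(* Let $\sigma$ be a signature containing $\triangleright$ and let $\mathcal{A}$ be a $\sigma$-algebra. If $\mathcal{A}$ has a meet-complete representation by partial functions, then the atoms of $\mathcal{A}$ are separating: whenever $a \not\le b$ in $\mathcal{A}$ there is an atom $c$ of $\mathcal{A}$ with $c \le a$ and $c \not\le b$. In particular, $\mathcal{A}$ is atomic (every nonzero element lies above some atom).
   Context: Signatures $\sigma$ are sets of operation symbols drawn from: $\triangleright$ (antidomain restriction), $;$ (composition), $\wedge$ (intersection), $\mathrm{upd}$ (update), $\sqcup$ (preferential union), $\mathsf{D}$ (domain), $\mathsf{A}$ (antidomain), interpreted on partial functions as: $f \triangleright g = \{(x,y) \in g : x \notin \mathrm{dom}(f)\}$; $f;g$ = relational composition ($f$ first); $f\wedge g = f\cap g$; $\mathrm{upd}(f,g)(x)$ is $f(x)$ if $f(x)$ defined and $g(x)$ undefined, $g(x)$ if both defined, undefined otherwise; $(f\sqcup g)(x)$ is $f(x)$ if defined, else $g(x)$; $\mathsf{D}(f)$ = identity on $\mathrm{dom}(f)$; $\mathsf{A}(f)$ = identity on the complement of $\mathrm{dom}(f)$ in the base. A representation by partial functions is an isomorphism onto a $\sigma$-algebra of partial functions with these operations. Define $0 := a\triangleright a$, $a\lhd b := (a\triangleright b)\triangleright b$, $a \le b :\iff a\lhd b = a$; for representable algebras this is a partial order with least element $0$ and $a\le b\iff\theta(a)\subseteq\theta(b)$. An atom is a minimal nonzero element. A representation $\theta$ is meet complete if for every nonempty $S$ with $\bigwedge S$ existing in $(\mathcal{A},\le)$, $\theta(\bigwedge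 S)=\bigcap\theta[S]$. *)

(* Defs.v *)
Inductive sym : Type :=
  | s_arestr
  | s_comp
  | s_meet
  | s_upd
  | s_pref
  | s_dom
  | s_antidom.

Definition signature := sym -> Prop.

(* An algebra carrying (interpretations of) all the symbols; a sigma-algebra
   is one of these where only the symbols in sigma are relevant (the
   representation is required to preserve only those). *)
Record alg : Type := Alg {
  carrier :> Type;
  op_arestr : carrier -> carrier -> carrier;
  op_comp   : carrier -> carrier -> carrier;
  op_meet   : carrier -> carrier -> carrier;
  op_upd    : carrier -> carrier -> carrier;
  op_pref   : carrier -> carrier -> carrier;
  op_dom    : carrier -> carrier;
  op_antidom : carrier -> carrier
}.

Definition rel (X : Type) := X -> X -> Prop.

Definition is_pfun {X : Type} (f : rel X) : Prop :=
  forall x y z, f x y -> f x z -> y = z.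

Definition rdom {X : Type} (f : rel X) (x : X) : Prop := exists y, f x y.

Definition pf_arestr {X : Type} (f g : rel X) : rel X :=
  fun x y => g x y /\ ~ rdom f x.
Definition pf_comp {X : Type} (f g : rel X) : rel X :=
  fun x y => exists z, f x z /\ g z y.
Definition pf_meet {X : Type} (f g : rel X) : rel X :=
  fun x y => f x y /\ g x y.
Definition pf_upd {X : Type} (f g : rel X) : rel X :=
  fun x y => (f x y /\ ~ rdom g x) \/ (rdom f x /\ g x y).
Definition pf_pref {X : Type} (f g : rel X) : rel X :=
  fun x y => f x y \/ (~ rdom f x /\ g x y).
Definition pf_dom {X : Type} (f : rel X) : rel X :=
  fun x y => x = y /\ rdom f x.
Definition pf_antidom {X : Type} (f : rel X) : rel X :=
  fun x y => x = y /\ ~ rdom f x.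

Definition preserves {A : alg} {X : Type} (theta : A -> rel X) (s : sym) : Prop :=
  match s with
  | s_arestr => forall a b, theta (op_arestr A a b) = pf_arestr (theta a) (theta b)
  | s_comp   => forall a b, theta (op_comp A a b) = pf_comp (theta a) (theta b)
  | s_meet   => forall a b, theta (op_meet A a b) = pf_meet (theta a) (theta b)
  | s_upd    => forall a b, theta (op_upd A a b) = pf_upd (theta a) (theta b)
  | s_pref   => forall a b, theta (op_pref A a b) = pf_pref (theta a) (theta b)
  | s_dom    => forall a, theta (op_dom A a) = pf_dom (theta a)
  | s_antidom => forall a, theta (op_antidom A a) = pf_antidom (theta a)
  end.

Definition representation (sigma : signature) (A : alg) (X : Type)
  (theta : A -> rel X) : Prop :=
  (forall a, is_pfun (theta a)) /\
  (forall a b, theta a = theta b -> a = b) /\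
  (forall s, sigma s -> preserves theta s).

Definition ale {A : alg} (a b : A) : Prop := op_arestr A (op_arestr A a b) b = a.

(* a is the zero element 0 = a |> a  (0 := x |> x, independent of x). *)
Definition is_zero {A : alg} (a : A) : Prop := a = op_arestr A a a.

Definition atom {A : alg} (c : A) : Prop :=
  ~ is_zero c /\ forall d : A, ale d c -> is_zero d \/ d = c.

Definition is_glb {A : alg} (S : A -> Prop) (m : A) : Prop :=
  (forall s, S s -> ale m s) /\
  (forall l, (forall s, S s -> ale l s) -> ale l m).

Definition meet_complete {A : alg} {X : Type} (theta : A -> rel X) : Prop :=
  forall (S : A -> Prop) (m : A), (exists s, S s) -> is_glb S m ->
    forall x y, theta m x y <-> (forall s, S s -> theta s x y).

(* Main.v *)
Require Import Defs.
From Stdlib Require Import Classical FunctionalExtensionality PropExtensionality.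

Lemma rel_ext {X : Type} (f g : rel X) :
  (forall x y, f x y <-> g x y) -> f = g.
Proof.
  intros H. apply functional_extensionality; intro x.
  apply functional_extensionality; intro y.
  apply propositional_extensionality; apply H.
Qed.

Section Helpers.
Variables (A : alg) (X : Type) (th : A -> rel X).
Hypothesis Hpf : forall a, is_pfun (th a).
Hypothesis Hinj : forall a b, th a = th b -> a = b.
Hypothesis Har : forall a b, th (op_arestr A a b) = pf_arestr (th a) (th b).

Lemma Tar a b x y : th (op_arestr A a b) x y <-> th b x y /\ ~ rdom (th a) x.
Proof. rewrite Har. unfold pf_arestr. tauto. Qed.

Lemma ale_iff a b : ale a b <-> (forall x y, th a x y -> th b x y).
Proof.
  unfold ale. split.
  - intros H x y Ha. rewrite <- H in Ha. apply Tar in Ha. tauto.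
  - intros H. apply Hinj. apply rel_ext. intros x y.
    rewrite Tar. split.
    + intros [Hb Hn].
      destruct (classic (rdom (th a) x)) as [[w Hw]|Hnd].
      * pose proof (H _ _ Hw) as Hbw. rewrite (Hpf b x y w Hb Hbw). exact Hw.
      * exfalso. apply Hn. exists y. apply Tar. split; assumption.
    + intros Ha. split. apply H; exact Ha.
      intros [z Hz]. apply Tar in Hz. destruct Hz as [_ Hz]. apply Hz. exists y; exact Ha.
Qed.

Lemma zero_iff a : is_zero a <-> (forall x y, ~ th a x y).
Proof.
  unfold is_zero. split.
  - intros H x y Ha. rewrite H in Ha. apply Tar in Ha. destruct Ha as [Ha Hn].
    apply Hn. exists y. exact Ha.
  - intros H. apply Hinj. apply rel_ext. intros x y. rewrite Tar.
    split; intros Hc; exfalso. eapply H; exact Hc. eapply H; apply Hc.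
Qed.

End Helpers.

Theorem corollary4p5 (sigma : signature) (A : alg) :
  sigma s_arestr ->
  (exists (X : Type) (theta : A -> rel X),
      representation sigma A X theta /\ meet_complete theta) ->
  (forall a b : A, ~ ale a b ->
     exists c : A, atom c /\ ale c a /\ ~ ale c b) /\
  (forall a : A, ~ is_zero a -> exists c : A, atom c /\ ale c a).
Proof.
  intros Hs [X [th [[Hpf [Hinj Hpres]] Hmc]]].
  pose proof (Hpres s_arestr Hs) as Har. simpl in Har.
  pose proof (ale_iff A X th Hpf Hinj Har) as AL.
  pose proof (zero_iff A X th Hinj Har) as ZR.
  pose proof (Tar A X th Har) as TA.
  assert (Main : forall a b : A, ~ ale a b ->
     exists c : A, atom c /\ ale c a /\ ~ ale c b).
  { intros a b Hab.
    rewrite AL in Hab.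
    apply not_all_ex_not in Hab. destruct Hab as [x Hab].
    apply not_all_ex_not in Hab. destruct Hab as [y Hab].
    apply imply_to_and in Hab. destruct Hab as [Hxa Hxb].
    apply NNPP. intro Hno.
    set (S := fun s : A => ale s a /\ th s x y).
    assert (Hglb : is_glb S (op_arestr A a a)).
    { split.
      - intros s _. apply AL. intros u v Hu. rewrite TA in Hu.
        destruct Hu as [Hu Hn]. exfalso. apply Hn. exists v; exact Hu.
      - intros l Hl. apply AL. intros u v Hu. exfalso.
        assert (Hla : ale l a) by (apply Hl; split; [apply AL; auto | exact Hxa]).
        destruct (classic (th l x y)) as [Hlxy|Hlxy].
        +
          assert (Hnat : ~ atom l).
          { intro Hat. apply Hno. exists l. split; [exact Hat|split; [exact Hla|]].
            intro Hlb. apply Hxb. rewrite AL in Hlb. apply Hlb. exact Hlxy. }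
          unfold atom in Hnat.
          assert (Hnz : ~ is_zero l).
          { intro Hz. rewrite ZR in Hz. eapply Hz; exact Hu. }
          apply not_and_or in Hnat. destruct Hnat as [Hn|Hn]; [contradiction|].
          apply not_all_ex_not in Hn. destruct Hn as [d Hn].
          apply imply_to_and in Hn. destruct Hn as [Hdl Hn].
          apply not_or_and in Hn. destruct Hn as [Hdz Hdne].
          rewrite AL in Hdl.
          destruct (classic (rdom (th d) x)) as [[w Hw]|Hnd].
          * (* d in S *)
            assert (Hwy : w = y) by (apply (Hpf l x w y); [apply Hdl; exact Hw| exact Hlxy]).
            subst w.
            assert (Hld : ale l d).
            { apply Hl. split; [apply AL; intros; rewrite AL in Hla; apply Hla, Hdl; assumption|exact Hw]. }
            apply Hdne. apply Hinj. apply rel_ext. intros p q. split.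
            apply Hdl. rewrite AL in Hld. apply Hld.
          * assert (Hld : ale l (op_arestr A d l)).
            { apply Hl. split.
              - apply AL. intros p q Hp. rewrite TA in Hp. rewrite AL in Hla. apply Hla. apply Hp.
              - apply TA. split; assumption. }
            apply Hdz. apply ZR. intros p q Hp.
            rewrite AL in Hld. specialize (Hld p q (Hdl p q Hp)).
            rewrite TA in Hld. destruct Hld as [_ Hld]. apply Hld. exists q; exact Hp.
        +
          assert (Hnd : ~ rdom (th l) x).
          { intros [w Hw]. apply Hlxy. rewrite AL in Hla.
            rewrite (Hpf a x y w Hxa (Hla _ _ Hw)). exact Hw. }
          assert (Hll : ale l (op_arestr A l a)).
          { apply Hl. split.
            - apply AL. intros p q Hp. rewrite TA in Hp. apply Hp.
            - apply TA. split; assumption. }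
          rewrite AL in Hll. specialize (Hll u v Hu). rewrite TA in Hll.
          destruct Hll as [_ Hll]. apply Hll. exists v; exact Hu. }
    assert (Hne : exists s, S s).
    { exists a. split; [apply AL; auto | exact Hxa]. }
    pose proof (proj2 (Hmc S _ Hne Hglb x y)) as H0.
    assert (H1 : th (op_arestr A a a) x y) by (apply H0; intros s [_ Hs']; exact Hs').
    apply TA in H1. destruct H1 as [_ H1]. apply H1. exists y; exact Hxa. }
  split; [exact Main|].
  intros a Ha.
  destruct (Main a (op_arestr A a a)) as [c [Hc [Hca _]]].
  - intro H. apply Ha. apply ZR. intros x y Hxy. rewrite AL in H.
    specialize (H x y Hxy). rewrite TA in H. destruct H as [_ H]. apply H. exists y; exact Hxy.
  - exists c. auto.
Qed.
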